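(* Let $P$ be a program, $F$ a set of facts, and $E$ an embedding program for $P\cup F$. Then $AS(\mathrm{grnd}(P)\cup F)=AS(E)$.
   Context: A program is a finite set of rules of the form $\alpha_1 \mid \dots \mid \alpha_k \;\texttt{:-}\; \beta_1,\dots,\beta_n, \mathit{not}\ \beta_{n+1},\dots,\mathit{not}\ \beta_m$ ($k,n,m\ge 0$) over atoms $p(\mathbf{X})$, with $H(r)=\{\alpha_1,\dots,\alpha_k\}$, $B^+(r)=\{\beta_1,\dots,\beta_n\}$, $B^-(r)=\{\mathit{not}\ \beta_{n+1},\dots,\mathit{not}\ \beta_m\}$, $B(r)=B^+(r)\cup B^-(r)$. Programs are safe (every variable of a rule occurs in an atom of its positive body) and contain no facts; facts are given separately as a set $F$ of ground atoms, each fact $a$ being regarded as the ground rule with head $\{a\}$ and empty body. All constants come from a fixed finite Herbrand universe $U$. For a set of rules $R$, $\mathrm{Heads}(R)=\bigcup_{r\in R}H(r)$. $\mathrm{grnd}(P)$ is the set of all ground instances of rules of $P$. For a ground program $G$ and a set of ground atoms $A$, the FLP reduct is $G^A=\{r\in G : A\models B(r)\}$; $A$ is an answer set of $G$ if $A$ is a subset-minimal model of $G^A$. $AS(G)$ is the set of answer sets of $G$. Embeddings: for a set of ground rules $R\subseteq \mathrm{grnd}(P)\cup F$ and a rule $r\in \mathrm{grnd}(P)\cup F$: $R\vdash_b r$ iff for every $a\in B^+(r)$ there is $r'\in R$ with $a\in H(r')$; $R\vdash_h r$ iff $r\in R$; $R\vdash r$ iff either $R\nvdash_b r$ or $R\vdash_h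 r$. A set $E\subseteq \mathrm{grnd}(P)\cup F$ is an embedding program for $P\cup F$ if $E\vdash r$ for every $r\in \mathrm{grnd}(P)\cup F$. *)

(* Defs.v *)
From Stdlib Require Import List.
Import ListNotations.
Set Implicit Arguments.

Inductive term (U : Type) : Type :=
| TVar : nat -> term U
| TConst : U -> term U.
Arguments TVar {U} _.
Arguments TConst {U} _.

Record atom (T : Type) : Type := mkAtom { apred : nat ; aargs : list T }.

(* Rule  H :- B+, not B-.  with H, B+, B- given as lists of atoms. *)
Record rule (A : Type) : Type :=
  mkRule { rhead : list A ; rpos : list A ; rneg : list A }.

Definition natom (U : Type) := atom (term U).
Definition gatom (U : Type) := atom U.
Definition nrule (U : Type) := rule (natom U).
Definition grule (U : Type) := rule (gatom U).

Definition program (U : Type) := list (nrule U).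

Definition term_vars U (t : term U) : list nat :=
  match t with TVar v => [v] | TConst _ => [] end.
Definition atom_vars U (a : natom U) : list nat := flat_map (@term_vars U) (aargs a).
Definition occurs_in_rule U (x : nat) (r : nrule U) : Prop :=
  exists a, (In a (rhead r) \/ In a (rpos r) \/ In a (rneg r)) /\ In x (atom_vars a).

Definition safe_rule U (r : nrule U) : Prop :=
  forall x, occurs_in_rule x r -> exists a, In a (rpos r) /\ In x (atom_vars a).
Definition safe_program U (P : program U) : Prop := forall r, In r P -> safe_rule r.

Definition is_fact_rule A (r : rule A) : Prop :=
  (exists a, rhead r = [a]) /\ rpos r = [] /\ rneg r = [].
Definition no_facts U (P : program U) : Prop := forall r, In r P -> ~ is_fact_rule r.

Definition subst_term U (s : nat -> U) (t : term U) : U :=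
  match t with TVar v => s v | TConst c => c end.
Definition subst_atom U (s : nat -> U) (a : natom U) : gatom U :=
  mkAtom (apred a) (map (subst_term s) (aargs a)).
Definition subst_rule U (s : nat -> U) (r : nrule U) : grule U :=
  mkRule (map (subst_atom s) (rhead r)) (map (subst_atom s) (rpos r))
         (map (subst_atom s) (rneg r)).

Definition gprog (U : Type) := grule U -> Prop.
Definition interp (U : Type) := gatom U -> Prop.

Definition grnd U (P : program U) : gprog U :=
  fun g => exists r s, In r P /\ g = subst_rule s r.

Definition fact_rule U (a : gatom U) : grule U := mkRule [a] [] [].

Definition grnd_facts U (P : program U) (F : interp U) : gprog U :=
  fun g => grnd P g \/ exists a, F a /\ g = fact_rule a.

Definition body_true U (A : interp U) (r : grule U) : Prop :=
  (forall a, In a (rpos r) -> A a) /\ (forall a, In a (rneg r) -> ~ A a).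
Definition rule_sat U (A : interp U) (r : grule U) : Prop :=
  body_true A r -> exists a, In a (rhead r) /\ A a.
Definition is_model U (G : gprog U) (A : interp U) : Prop :=
  forall r, G r -> rule_sat A r.
Definition reduct U (G : gprog U) (A : interp U) : gprog U :=
  fun r => G r /\ body_true A r.
Definition subset_interp U (A B : interp U) : Prop := forall a, A a -> B a.
Definition is_minimal_model U (G : gprog U) (A : interp U) : Prop :=
  is_model G A /\
  forall B, subset_interp B A -> is_model G B -> subset_interp A B.
Definition answer_set U (G : gprog U) (A : interp U) : Prop :=
  is_minimal_model (reduct G A) A.

Definition heads_contain U (R : gprog U) (a : gatom U) : Prop :=
  exists r', R r' /\ In a (rhead r').
Definition derives_b U (R : gprog U) (r : grule U) : Prop :=
  forall a, In a (rpos r) -> heads_contain R a.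
Definition derives_h U (R : gprog U) (r : grule U) : Prop := R r.
Definition derives U (R : gprog U) (r : grule U) : Prop :=
  ~ derives_b R r \/ derives_h R r.

Definition embedding_program U (P : program U) (F : interp U) (E : gprog U) : Prop :=
  (forall r, E r -> grnd_facts P F r) /\
  (forall r, grnd_facts P F r -> derives E r).

(* Main.v *)
Require Import Defs.
From Stdlib Require Import List.

Lemma mm_ext U (G1 G2 : gprog U) A :
  (forall r, G1 r <-> G2 r) -> is_minimal_model G1 A -> is_minimal_model G2 A.
Proof.
  intros Heq [Hm Hmin]. split.
  - intros r Hr. apply Hm, Heq, Hr.
  - intros B HB HBm. apply Hmin; auto. intros r Hr. apply HBm, Heq, Hr.
Qed.

Section S.
Variable U : Type.
Variable E X : gprog U.
Hypothesis HXE : forall r, X r -> derives E r.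
Hypothesis HEX : forall r, E r -> X r.

Lemma as_heads A : answer_set X A -> forall a, A a -> heads_contain E a.
Proof.
  intros [Hm Hmin].
  set (B := fun a => A a /\ heads_contain E a).
  assert (HB : is_model (reduct X A) B).
  { intros r [Hr Hbody] [Hp Hn].
    assert (Hd : derives_b E r) by (intros a Ha; apply (Hp a Ha)).
    destruct (HXE r Hr) as [Hnd | HEr]; [contradiction|].
    destruct (Hm r (conj Hr Hbody) Hbody) as [a [Ha HAa]].
    exists a; split; auto. split; auto. exists r; auto. }
  intros a Ha. apply (Hmin B (fun x H => proj1 H) HB a Ha).
Qed.

Lemma reduct_eq A : (forall a, A a -> heads_contain E a) ->
  forall r, reduct X A r <-> reduct E A r.
Proof.
  intros Hh r; split.
  - intros [Hr Hb]. split; auto.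
    destruct (HXE r Hr) as [Hnd | HEr]; auto.
    exfalso; apply Hnd. intros a Ha. apply Hh, (proj1 Hb a Ha).
  - intros [Hr Hb]. split; auto.
Qed.
End S.

Theorem mainTheorem2 (U : Type) (U_finite : exists l : list U, forall u : U, In u l)
  (P : program U) (HPsafe : safe_program P) (HPnofacts : no_facts P)
  (F : interp U) (E : gprog U) (HE : embedding_program P F E) :
  forall A : interp U, answer_set (grnd_facts P F) A <-> answer_set E A.
Proof.
  destruct HE as [HEG HGE].
  assert (HEE : forall r, E r -> derives E r) by (intros r Hr; right; exact Hr).
  intros A; split; intro H.
  - pose proof (@as_heads U E (grnd_facts P F) HGE A H) as Hh.
    unfold answer_set. eapply mm_ext; [|exact H].
    apply reduct_eq; auto.
  - pose proof (@as_heads U E E HEE A H) as Hh.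
    unfold answer_set. eapply mm_ext; [|exact H].
    intro r. symmetry. apply (@reduct_eq U E (grnd_facts P F) HGE HEG A Hh).
Qed.
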